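(* Let $T$ be a real inner product space of dimension $n > 4$ and let $\mathcal{R}$ be the space of algebraic curvature tensors on $T$. Then the image of the quadratic map $\rho: S^3 T^* \to \Lambda^2 T^* \otimes \Lambda^2 T^*$, $\rho(A)_{ijkl} = -g^{ab} A_{ika}A_{jlb} + g^{ab} A_{ila}A_{jkb}$, is not all of $\mathcal{R}$. Consequently the requirement that the Riemann curvature tensor at each point lies in the image of $\rho$, which is necessary for a metric $g$ of dimension $n>4$ to be a Hessian metric, is a non-trivial condition.
   Context: A Riemannian metric $g$ is Hessian if around each point there are local coordinates $x$ and a function $\phi$ with $g_{ij} = \partial^2 \phi/\partial x_i\partial x_j$. It is known that if $g$ is Hessian, with dually flat connection $\overline{\nabla} = \nabla + A$ ($\nabla$ the Levi-Civita connection), then $A$ (with indices lowered by $g$) lies in $S^3T^*$ and the Riemann curvature satisfies $R_{ijkl} = -g^{ab}A_{ika}A_{jlb} + g^{ab}A_{ila}A_{jkb}$, i.e. $R = \rho(A)$ at each point. An algebraic curvature tensor is an element of $\Lambda^2T^*\otimes\Lambda^2T^*$ that is symmetric under exchange of the two pairs and satisfies the first Bianchi identity; $\dim\mathcal{R} = n^2(n^2-1)/12$. *)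

(* Defs.v *)
(* T = R^n (coordinates w.r.t. an arbitrary basis), with the
   inner product given by a symmetric positive-definite Gram matrix g. *)
From mathcomp Require Import all_boot all_order all_algebra.
From mathcomp Require Import reals.
Set Implicit Arguments. Unset Strict Implicit. Unset Printing Implicit Defensive.
Import Order.TTheory GRing.Theory Num.Theory.
Local Open Scope ring_scope.

Definition tensor3 (R : Type) (n : nat) := 'I_n -> 'I_n -> 'I_n -> R.
Definition tensor4 (R : Type) (n : nat) := 'I_n -> 'I_n -> 'I_n -> 'I_n -> R.

Definition inner_product {R : numDomainType} {n : nat} (g : 'M[R]_n) : Prop :=
  g^T = g /\ (forall v : 'rV[R]_n, v != 0 -> 0 < (v *m g *m v^T) 0 0).

Definition sym3 {R : Type} {n : nat} (A : tensor3 R n) : Prop :=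
  (forall i j k, A i j k = A j i k) /\ (forall i j k, A i j k = A i k j).

Definition rho {R : fieldType} {n : nat} (g : 'M[R]_n) (A : tensor3 R n)
  : tensor4 R n :=
  fun i j k l =>
    - (\sum_(a < n) \sum_(b < n) (invmx g) a b * A i k a * A j l b)
    + (\sum_(a < n) \sum_(b < n) (invmx g) a b * A i l a * A j k b).

Definition alg_curv {R : pzRingType} {n : nat} (Rm : tensor4 R n) : Prop :=
  [/\ (forall i j k l, Rm i j k l = - Rm j i k l),
      (forall i j k l, Rm i j k l = - Rm i j l k),
      (forall i j k l, Rm i j k l = Rm k l i j) &
      (forall i j k l, Rm i j k l + Rm j k i l + Rm k i j l = 0)].

(* Main.v *)
Require Import Defs.
From HB Require Import structures.
From mathcomp Require Import all_boot all_order all_algebra.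
From mathcomp Require Import reals.
From mathcomp Require Import zify ring mpoly.
From Stdlib Require Import Classical.
Set Implicit Arguments. Unset Strict Implicit. Unset Printing Implicit Defensive.
Import Order.TTheory GRing.Theory Num.Theory.

Section E.
Variable n : nat.
Definition SA := [set t : 'I_n * 'I_n * 'I_n | (t.1.1 <= t.1.2 <= t.2)%N].
Definition PR' := [set t : 'I_n * 'I_n | (t.1 < t.2)%N].
Definition QR' := [set t : 'I_n * 'I_n * 'I_n |
  [&& (t.1.1 < t.1.2)%N, t.2 != t.1.1 & t.2 != t.1.2]].

Lemma card_SA : #|SA| <= #|[set t : 3.-tuple 'I_n | sorted leq (map val t)]|.
Proof.
pose f (t : 'I_n * 'I_n * 'I_n) := [tuple t.1.1; t.1.2; t.2].
have finj : injective f.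
  by move=> [[a b] c] [[a' b'] c'] /(congr1 val) /= [-> -> ->].
rewrite -(card_imset SA finj); apply: subset_leq_card.
apply/subsetP => _ /imsetP[[[a b] c] + ->]; rewrite !inE /= => /andP[h1 h2].
by rewrite h1 h2.
Qed.

Lemma card_PR : #|[set t : 2.-tuple 'I_n | sorted ltn (map val t)]| <= #|PR'|.
Proof.
pose g (t : 2.-tuple 'I_n) := (tnth t ord0, tnth t (inord 1)).
have ginj : injective g.
  move=> t t' [e0 e1]; apply: eq_from_tnth => i.
  case: i => [[|[|]]] //= Hi.
    by rewrite (_ : Ordinal Hi = ord0) ?e0 //; apply: val_inj.
  by rewrite (_ : Ordinal Hi = inord 1) ?e1 //; apply: val_inj; rewrite /= inordK.
rewrite -(card_imset _ ginj); apply: subset_leq_card.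
apply/subsetP => _ /imsetP[t + ->]; rewrite !inE /=.
have [a [b ->]] : exists a b, t = [tuple a; b].
  case: t => [[|a [|b []]]] //= st; exists a, b; exact: val_inj.
by rewrite /= andbT (tnth_nth a) /= (tnth_nth a) /= inordK.
Qed.

Lemma card_QR : 3 * #|[set t : 3.-tuple 'I_n | sorted ltn (map val t)]| <= #|QR'|.
Proof.
set S3 := [set t : 3.-tuple 'I_n | sorted ltn (map val t)].
pose h (p : 'I_3 * 3.-tuple 'I_n) :=
  let t := p.2 in
  let a := tnth t ord0 in let b := tnth t (inord 1) in let c := tnth t (inord 2) in
  if val p.1 == 0%N then (a, b, c) else if val p.1 == 1%N then (a, c, b) else (b, c, a).
have ES (t : 3.-tuple 'I_n) : t \in S3 -> exists a b c, [/\ t = [tuple a; b; c], (a < b)%N & (b < c)%N].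
  rewrite inE; case: t => [[|a [|b [|c []]]]] //= st /andP[h1 /andP[h2 _]].
  exists a, b, c; split => //; exact: val_inj.
have hinj : {in setX [set: 'I_3] S3 &, injective h}.
  move=> [i t] [i' t'] /setXP[_ /ES[a [b [c [-> h1 h2]]]]] /setXP[_ /ES[a' [b' [c' [-> h1' h2']]]]].
  rewrite /h /= !(tnth_nth a) /= !inordK //.
  have Ei (j : 'I_3) : j = ord0 \/ j = inord 1 \/ j = inord 2.
    case: j => [[|[|[|]]]] Hj //=; [left|right;left|right;right]; apply: val_inj => //=; by rewrite inordK.
  case: (Ei i) => [->|[->|->]]; case: (Ei i') => [->|[->|->]]; rewrite /= ?inordK //= => -[e1 e2 e3].
  all: try (subst => //; lia).
have -> : (3 * #|S3| = #|setX [set: 'I_3] S3|)%N by rewrite cardsX cardsT card_ord.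
rewrite -(card_in_imset hinj); apply: subset_leq_card.
apply/subsetP => _ /imsetP[[i t] /setXP[_ /ES[a [b [c [-> h1 h2]]]]] ->].
rewrite inE /h /= !(tnth_nth a) /= !inordK //.
case: ifP => _; first by rewrite -!val_eqE /=; lia.
case: ifP => _; by rewrite -!val_eqE /=; lia.
Qed.
End E.

Lemma bin_arith n : (4 <= n)%N -> ('C(3 + n, 3) < 'C(n.+1, 2) + 3 * 'C(n.+1, 3))%N.
Proof.
move=> hn; have [k hk] : exists k, n = k.+4 by exists (n - 4); lia.
subst n.
have e1 := bin_ffact (3 + k.+4) 3; have e2 := bin_ffact k.+4.+1 2; have e3 := bin_ffact k.+4.+1 3.
rewrite !ffactnS !ffactn0 /= in e1 e2 e3.
have f3 : 3`! = 6 by []. have f2 : 2`! = 2 by [].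
rewrite f3 in e1 e3; rewrite f2 in e2.
set X := 'C(_, 3) in e1 *; set Y := 'C(_, 2) in e2 *; set Z := 'C(_, 3) in e3 *.
have P : ((3 + k.+4) * ((2 + k.+4) * ((1 + k.+4) * 1)) <
  3 * (k.+4.+1 * (k.+4 * 1)) + 3 * (k.+4.+1 * (k.+4 * (k.+3 * 1))))%N by nia.
lia.
Qed.

Lemma card_cmp n : (4 < n)%N -> (#|SA n| < #|PR' n| + #|QR' n|)%N.
Proof.
case: n => // n hn.
apply: (leq_ltn_trans (card_SA _)); rewrite card_sorted_tuples.
apply: (leq_trans (bin_arith hn)).
by apply: leq_add; [rewrite -(card_ltn_sorted_tuples 2 n.+1) card_PR | rewrite -(card_ltn_sorted_tuples 3 n.+1) card_QR].
Qed.


Lemma bin_double d k : 'C(d.*2 + k, k) <= 2 ^ k * 'C(d + k, k).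
Proof.
elim: k => [|k IH]; first by rewrite !bin0.
have E1 := mul_bin_diag (d.*2 + k).+1 k; rewrite /= in E1.
have E2 := mul_bin_diag (d + k).+1 k; rewrite /= in E2.
rewrite !addnS.
have H : k.+1 * 'C((d.*2 + k).+1, k.+1) <= k.+1 * (2 ^ k.+1 * 'C((d + k).+1, k.+1)).
  rewrite -E1 mulnCA -E2 expnS -mulnA mulnCA.
  apply: (leq_trans (leq_mul (leqnn _) IH)).
  set X := 2 ^ k; set Y := 'C(d + k, k).
  have : (d.*2 + k).+1 <= 2 * (d + k).+1 by rewrite -addnn; lia.
  move: (d.*2 + k).+1 (d+k).+1 => a b hab.
  rewrite mulnCA [2 * (b * Y)]mulnA [X * _]mulnC mulnA [X * _]mulnC -!mulnA.
  apply: (leq_trans (leq_mul hab (leqnn (Y * X)))).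
  by rewrite -mulnA [X * Y]mulnC.
by rewrite leq_pmul2l in H.
Qed.

Lemma bin_compare m : 0 < m -> 'C(2 * (m * 2 ^ m) + m.-1, m.-1) < 'C(m * 2 ^ m + m, m).
Proof.
case: m => // m _ /=; set d := m.+1 * 2 ^ m.+1.
have H1 := bin_double d m; rewrite -mul2n in H1.
have E := mul_bin_diag (d + m).+1 m; rewrite /= -addnS in E.
have P : 0 < 'C(2 * d + m, m) by rewrite bin_gt0 leq_addl.
have Pd : m.+1 * 2 ^ m < d + m.+1 by rewrite /d expnS; nia.
have R1 : m.+1 * 2 ^ m * 'C(2 * d + m, m) < (d + m.+1) * 'C(2 * d + m, m).
  by rewrite ltn_pmul2r.
have R2 : (d + m.+1) * 'C(2 * d + m, m) <= (d + m.+1) * (2 ^ m * 'C(d + m, m)).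
  by rewrite leq_mul2l H1 orbT.
have R3 : (d + m.+1) * (2 ^ m * 'C(d + m, m)) = m.+1 * 2 ^ m * 'C(d + m.+1, m.+1).
  by rewrite mulnCA E mulnCA mulnA.
have : m.+1 * 2 ^ m * 'C(2 * d + m, m) < m.+1 * 2 ^ m * 'C(d + m.+1, m.+1).
  by rewrite -R3; exact: leq_trans R1 R2.
by rewrite ltn_pmul2l // muln_gt0 expn_gt0.
Qed.


Local Notation widen := (widen_ord (leqnSn _)).
Local Open Scope ring_scope.
Section A.
Variable R : realType.

Lemma poly_nz_eval (q : {poly R}) : q != 0 -> exists t, q.[t] != 0.
Proof.
move=> nzq; apply: NNPP => H0.
have H : forall t, q.[t] = 0.
  by move=> t; case: (eqVneq q.[t] 0) => // Ht; case: H0; exists t.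
have := @roots_geq_poly_eq0 _ q [seq i%:R | i <- iota 0 (size q)].
rewrite size_map size_iota leqnn => /(_ _ _ isT) E.
move/eqP: nzq; apply; apply: E.
  by apply/allP => x _; apply/rootP; exact: H.
rewrite map_inj_uniq ?iota_uniq // => i j /eqP; rewrite eqr_nat => /eqP //.
Qed.

Lemma muni_eval k (p : {mpoly R[k.+1]}) (v : 'I_k.+1 -> R) :
  p.@[v] = (map_poly (meval (fun i => v (widen i))) (muni p)).[v ord_max].
Proof.
rewrite muniE mevalE raddf_sum horner_sum /=.
apply: eq_bigr => m _.
rewrite map_polyZ /= map_polyXn hornerZ hornerXn mevalZ mevalX big_ord_recr /= -mulrA.
congr (_ * (_ * _)); apply: eq_bigr => i _; by rewrite mnmE.
Qed.

Lemma muni_coef k (p : {mpoly R[k.+1]}) (m0 : 'X_{1.. k.+1}) :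
  ((muni p)`_(m0 ord_max))@_([multinom m0 (widen i) | i < k]) = p@_m0.
Proof.
have -> : p@_m0 = (\sum_(m <- msupp p) (p@_m *: 'X_[m]))@_m0 by rewrite -mpolyE.
rewrite muniE coef_sum !raddf_sum /=.
apply: eq_bigr => m _.
rewrite coefZ coefXn mcoeffZ mcoeffX.
have [e|ne] := eqVneq (m ord_max) (m0 ord_max).
  rewrite mulr1 mcoeffZ mcoeffX.
  suff -> : ([multinom [tuple m (widen i) | i < k]] ==
   [multinom [tuple m0 (widen i) | i < k]]) = (m == m0) by [].
  apply/idP/idP => [/eqP/mnmP h|/eqP -> //].
  apply/eqP/mnmP => i.
  have [j ->|->] := unliftP ord_max i; last by rewrite e.
  have := h j; rewrite !mnmE.
  have -> : lift ord_max j = widen j by apply/val_inj; rewrite /= /bump leqNgt ltn_ord.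
  by [].
rewrite mulr0 mcoeff0 ; case: eqP => [E|]; last by rewrite mulr0.
by move: ne; rewrite E eqxx.
Qed.

Lemma muni_inj k (p : {mpoly R[k.+1]}) : muni p = 0 -> p = 0.
Proof.
move=> h; apply/mpolyP => m0; rewrite -muni_coef h coef0 mcoeff0; exact: raddf0.

Qed.

Lemma mpoly_nz_eval k (p : {mpoly R[k]}) : p != 0 -> exists v, p.@[v] != 0.
Proof.
elim: k p => [|k IH] p nzp.
  exists (fun _ => 0); rewrite (nvar0_mpolyC p) mevalC.
  by rewrite (nvar0_mpolyC p) mpolyC_eq0 in nzp.
have nzc : muni p != 0 by apply/eqP => /muni_inj /eqP; apply/negP.
have nzl : lead_coef (muni p) != 0 by rewrite lead_coef_eq0.
have [v' hv'] := IH _ nzl.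
set q := map_poly (meval v') (muni p).
have nzq : q != 0.
  apply/eqP => qE; move: hv'; rewrite /lead_coef.
  have := congr1 (fun r : {poly R} => r`_(size (muni p)).-1) qE.
  by rewrite /q coef_map /= coef0 => ->; rewrite eqxx.
have [t ht] := poly_nz_eval nzq.
exists (fun i : 'I_k.+1 => if unlift ord_max i is Some j then v' j else t).
rewrite muni_eval unlift_none.
rewrite (@eq_map_poly _ _ _ (meval v')) // => r; apply: meval_eq => i.
have -> : widen i = lift ord_max i by apply/val_inj; rewrite /= /bump leqNgt ltn_ord.
by rewrite liftK.
Qed.
End A.

Section C.
Variables (R : realType) (m N d : nat) (F : 'I_N.+1 -> {mpoly R[m.+1]}).
Hypothesis hF : forall i, F i \is 2.-homog.
Let lq := [tuple F i | i < N.+1].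

Lemma prod_homog (mm : 'X_{1..N.+1}) (r : seq 'I_N.+1) :
  \prod_(i <- r) tnth lq i ^+ mm i \is (\sum_(i <- r) 2 * mm i)%N.-homog.
Proof.
elim: r => [|i r IH]; first by rewrite !big_nil dhomog1.
rewrite !big_cons; apply: dhomogM => //.
by apply: dhomogMn; rewrite tnth_mktuple.
Qed.

Lemma comp_homog (p : {mpoly R[N.+1]}) : p \is d.-homog -> p \mPo lq \is (2 * d)%N.-homog.
Proof.
move=> hp; rewrite comp_mpolyE big_seq; apply: rpred_sum => mm hm.
apply: rpredZ.
have := prod_homog mm (index_enum _); rewrite -big_distrr /= -mdegE.
by rewrite (dhomog_mf hp hm).
Qed.

Definition Phi (P : dhomog N.+1 R d) : dhomog m.+1 R (2 * d) :=
  @indhomog m.+1 R (2 * d) (mpoly_of_dhomog P \mPo lq).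

Lemma PhiE P : mpoly_of_dhomog (Phi P) = mpoly_of_dhomog P \mPo lq.
Proof. by rewrite /Phi /indhomog insubdK // comp_homog // dhomog_is_dhomog. Qed.

Lemma Phi_linear : linear Phi.
Proof.
move=> a P Q; apply: val_inj => /=.
rewrite [LHS]PhiE linearP /=.
by rewrite [RHS]raddfD [X in _ = X + _]linearZ /= !PhiE.
Qed.

HB.instance Definition _ := GRing.isLinear.Build R (dhomog N.+1 R d) (dhomog m.+1 R (2 * d)) *:%R Phi Phi_linear.

Lemma Phi_ker : ('C(2 * d + m, 2 * d) < 'C(d + N, d))%N ->
  exists P : dhomog N.+1 R d, P != 0 /\ Phi P = 0.
Proof.
move=> hlt; set f := linfun Phi.
have := limg_ker_dim f fullv; rewrite dimvf.
have h1 : (\dim (f @: fullv) <= 'C(2 * d + m, 2 * d))%N.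
  by rewrite -[X in (_ <= X)%N](dimvf (dhomog m.+1 R (2 * d))) dimvS ?subvf.
have h2 : dim (dhomog N.+1 R d) = 'C(d + N, d) by [].
rewrite h2 => E.
have : (0 < \dim (fullv :&: lker f))%N.
  rewrite lt0n; apply/eqP => E0; move: E; rewrite E0 add0n => E.
  by move: h1; rewrite E leqNgt hlt.
rewrite lt0n dimv_eq0 => nz.
exists (vpick (fullv :&: lker f)); rewrite vpick0 nz; split => //.
have := memv_pick (fullv :&: lker f); rewrite memv_cap => /andP[_].
by rewrite memv_ker lfunE => /eqP.
Qed.
End C.


Lemma binC_add a b : 'C(a + b, b) = 'C(a + b, a).
Proof. by rewrite -[RHS]bin_sub ?leq_addr // addKn. Qed.

Lemma quad_not_onto (R : realType) (m N : nat) (F : 'I_N -> {mpoly R[m]}) :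
  (m < N)%N -> (forall i, F i \is 2.-homog) ->
  exists x : 'I_N -> R, forall y : 'I_m -> R, exists i, (F i).@[y] != x i.
Proof.
case: N F => [|N] F hmN hF; first by [].
case: m F hmN hF => [|m] F hmN hF.
  exists (fun i => (F i).@[fun _ => 0] + 1) => y; exists ord0.
  rewrite (@meval_eq _ _ y (fun _ => 0)); last by case.
  by rewrite -subr_eq0 opprD addrA subrr sub0r oppr_eq0 oner_eq0.
set d := (m.+1 * 2 ^ m.+1)%N.
have hd : ('C(2 * d + m, 2 * d) < 'C(d + N, d))%N.
  have -> : 'C(2 * d + m, 2 * d) = 'C(2 * d + m, m).

    by rewrite -[RHS]bin_sub ?leq_addl // addnK.
  apply: (leq_trans (bin_compare (ltn0Sn m))).
  rewrite binC_add -/d; apply: leq_bin2l; by rewrite leq_add2l.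
have [P [nzP PP]] := Phi_ker hF hd.
set p := mpoly_of_dhomog P.
have nzp : p != 0.
  by apply: contraNneq nzP => h; apply/eqP; apply: val_inj; rewrite /= -/p h.
have hp : p \mPo [tuple F i | i < N.+1] = 0.
  by rewrite /p -(PhiE hF P) PP.
have [x hx] := mpoly_nz_eval nzp.
exists x => y; apply: NNPP => H.
have H' : forall i, (F i).@[y] = x i.
  move=> i; case: (eqVneq (F i).@[y] (x i)) => // ne; case: H; by exists i.
move: hx; rewrite (@meval_eq _ _ x (fun i => (tnth [tuple F i | i < N.+1] i).@[y])).
  by rewrite -comp_mpoly_meval hp meval0 eqxx.
by move=> i; rewrite tnth_mktuple H'.
Qed.


Section D.
Variables (R : realType) (n : nat).

Definition Emx (u v : 'I_n) : 'I_n -> 'I_n -> R := fun a b => ((a == u) && (b == v))%:R.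
Definition KNt (h q : 'I_n -> 'I_n -> R) : tensor4 R n :=
  fun a b c d => h a c * q b d + h b d * q a c - h a d * q b c - h b c * q a d.

Lemma KN_alg h q : (forall a b, h a b = h b a) -> (forall a b, q a b = q b a) ->
  alg_curv (KNt h q).
Proof.
move=> hs qs; split => a b c d; rewrite /KNt.
- ring.
- ring.
- rewrite (hs c a) (qs d b) (hs d b) (qs c a) (hs c b) (qs d a) (hs d a) (qs c b); ring.
- rewrite (hs b a) (qs b a) (hs c b) (qs c b) (hs c a) (qs c a); ring.
Qed.

Lemma bmul (x y : bool) : (x%:R * y%:R : R) = (x && y)%:R.
Proof. by case: x; case: y; rewrite /= ?mulr1 ?mulr0. Qed.

Lemma cast4p (x1 y1 x2 y2 x3 y3 x4 y4 e : bool) :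
  x1 && y1 = e -> x2 && y2 = false -> x3 && y3 = false -> x4 && y4 = false ->
  (x1%:R * y1%:R + x2%:R * y2%:R - x3%:R * y3%:R - x4%:R * y4%:R : R) = e%:R.
Proof. by rewrite !bmul => -> -> -> ->; rewrite !subr0 addr0. Qed.

Lemma cast8p (x1 x1' y1 x2 x2' y2 x3 x3' y3 x4 x4' y4 e : bool) :
  x1 && y1 = e -> x1' && y1 = false -> x2 && y2 = false -> x2' && y2 = false ->
  x3 && y3 = false -> x3' && y3 = false -> x4 && y4 = false -> x4' && y4 = false ->
  ((x1%:R + x1'%:R) * y1%:R + (x2%:R + x2'%:R) * y2%:R
   - (x3%:R + x3'%:R) * y3%:R - (x4%:R + x4'%:R) * y4%:R : R) = e%:R.
Proof.
by rewrite !mulrDl !bmul => -> -> -> -> -> -> -> ->; rewrite !addr0 !subr0.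
Qed.

Definition T1 (t : 'I_n * 'I_n) := KNt (Emx t.1 t.1) (Emx t.2 t.2).
Definition T2 (t : 'I_n * 'I_n * 'I_n) :=
  KNt (fun a b => Emx t.1.1 t.1.2 a b + Emx t.1.2 t.1.1 a b) (Emx t.2 t.2).
Definition c1 (t : 'I_n * 'I_n) (Rm : tensor4 R n) := Rm t.1 t.2 t.1 t.2.
Definition c2 (t : 'I_n * 'I_n * 'I_n) (Rm : tensor4 R n) := Rm t.1.1 t.2 t.1.2 t.2.

Ltac zb := rewrite -?val_eqE /=; lia.

Lemma L11 t s : t \in PR' n -> s \in PR' n -> c1 t (T1 s) = (t == s)%:R.
Proof.
case: t => a b; case: s => a' b'; rewrite !inE /= => h1 h2.
rewrite /c1 /T1 /KNt /Emx /= xpair_eqE; apply: cast4p; zb.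
Qed.

Lemma L12 t s : t \in PR' n -> s \in QR' n -> c1 t (T2 s) = 0.
Proof.
case: t => a b; case: s => [[i k] j]; rewrite !inE /= => h1 /and3P[h2 h3 h4].
rewrite -?val_eqE /= in h3 h4.
rewrite /c1 /T2 /KNt /Emx /= -(mulr0n 1) -[0%N]/(nat_of_bool false).
apply: cast8p; zb.
Qed.

Lemma L21 t s : t \in QR' n -> s \in PR' n -> c2 t (T1 s) = 0.
Proof.
case: s => a b; case: t => [[i k] j]; rewrite !inE /= => /and3P[h2 h3 h4] h1.
rewrite -?val_eqE /= in h3 h4.
rewrite /c2 /T1 /KNt /Emx /= -(mulr0n 1) -[0%N]/(nat_of_bool false).
apply: cast4p; zb.
Qed.

Lemma L22 t s : t \in QR' n -> s \in QR' n -> c2 t (T2 s) = (t == s)%:R.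
Proof.
case: s => [[i' k'] j']; case: t => [[i k] j]; rewrite !inE /=.
move=> /and3P[h2 h3 h4] /and3P[h2' h3' h4'].
rewrite -?val_eqE /= in h3 h4 h3' h4'.
rewrite /c2 /T2 /KNt /Emx /= !xpair_eqE.
apply: cast8p; zb.
Qed.
End D.

Notation TR n := ('I_#|PR' n.+1| + 'I_#|QR' n.+1|)%type.

Section F.
Variables (R : realType) (n : nat).
Local Notation N1 := n.+1.

Definition sort3 (i j k : 'I_N1) : 'I_N1 * 'I_N1 * 'I_N1 :=
  if (i <= j)%N then (if (j <= k)%N then (i,j,k) else if (i <= k)%N then (i,k,j) else (k,i,j))
  else (if (i <= k)%N then (j,i,k) else if (j <= k)%N then (j,k,i) else (k,j,i)).

Lemma sort3_SA i j k : sort3 i j k \in SA N1.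
Proof.
rewrite /sort3; case: ifP => h1; [case: ifP => h2; [|case: ifP => h3]
  | case: ifP => h2; [|case: ifP => h3]]; rewrite inE /=; lia.
Qed.

Lemma sort3_sym (A : tensor3 R N1) i j k : sym3 A ->
  A (sort3 i j k).1.1 (sort3 i j k).1.2 (sort3 i j k).2 = A i j k.
Proof.
move=> [s1 s2]; rewrite /sort3; case: ifP => h1; [case: ifP => h2; [|case: ifP => h3]
  | case: ifP => h2; [|case: ifP => h3]] => //=.
all: first [ by rewrite (s2 i j k) | by rewrite (s1 k i j) (s2 i k j) | by rewrite (s1 j i k)
  | by rewrite (s2 j k i) (s1 j i k) | by rewrite (s1 k j i) (s2 j k i) (s1 j i k) ].
Qed.

Lemma x0SA : ((ord0, ord0, ord0) : 'I_N1 * 'I_N1 * 'I_N1) \in SA N1.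
Proof. by rewrite inE. Qed.

Definition vid i j k : 'I_#|SA N1| := enum_rank_in x0SA (sort3 i j k).
Definition Aof (A : tensor3 R N1) : 'I_#|SA N1| -> R :=
  fun a => A (enum_val a).1.1 (enum_val a).1.2 (enum_val a).2.

Lemma Aof_vid A i j k : sym3 A -> Aof A (vid i j k) = A i j k.
Proof. by move=> hA; rewrite /Aof /vid enum_rankK_in ?sort3_SA //; exact: sort3_sym. Qed.

Definition Fc (g : 'M[R]_N1) (i j k l : 'I_N1) : {mpoly R[#|SA N1|]} :=
  \sum_(a < N1) \sum_(b < N1) (invmx g a b) *:
     (- ('X_(vid i k a) * 'X_(vid j l b)) + 'X_(vid i l a) * 'X_(vid j k b)).

Lemma X_homog (i : 'I_#|SA N1|) : ('X_i : {mpoly R[#|SA N1|]}) \is 1%N.-homog.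
Proof. by rewrite dhomogX; apply/eqP/mdeg1. Qed.

Lemma Fc_homog g i j k l : Fc g i j k l \is 2%N.-homog.
Proof.
rewrite /Fc; apply: rpred_sum => a _; apply: rpred_sum => b _; apply: rpredZ.
by apply: rpredD; [rewrite dhomogN|]; apply: (dhomogM (X_homog _) (X_homog _)).
Qed.

Lemma Fc_eval g A i j k l : sym3 A -> (Fc g i j k l).@[Aof A] = rho g A i j k l.
Proof.
move=> hA; rewrite /Fc /rho raddf_sum -sumrN -big_split /=; apply: eq_bigr => a _.
rewrite raddf_sum -sumrN -big_split /=; apply: eq_bigr => b _.
rewrite mevalZ mevalD mevalN !mevalM !mevalXU !Aof_vid //; ring.
Qed.

Definition Tt (u : TR n) : tensor4 R N1 :=
  match u with inl p => T1 R (enum_val p) | inr q => T2 R (enum_val q) end.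
Definition piu (u : TR n) (Rm : tensor4 R N1) : R :=
  match u with inl p => c1 (enum_val p) Rm | inr q => c2 (enum_val q) Rm end.
Definition Fu (g : 'M[R]_N1) (u : TR n) : {mpoly R[#|SA N1|]} :=
  match u with
  | inl p => Fc g (enum_val p).1 (enum_val p).2 (enum_val p).1 (enum_val p).2
  | inr q => Fc g (enum_val q).1.1 (enum_val q).2 (enum_val q).1.2 (enum_val q).2
  end.

Lemma Fu_eval g A u : sym3 A -> (Fu g u).@[Aof A] = piu u (rho g A).
Proof. by move=> hA; case: u => p /=; rewrite Fc_eval. Qed.

Lemma Fu_homog g u : Fu g u \is 2%N.-homog.
Proof. by case: u => p; apply: Fc_homog. Qed.

Lemma piT u s : piu u (Tt s) = (s == u)%:R.
Proof.
case: u => p; case: s => p' /=.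
- by rewrite L11 ?enum_valP // (inj_eq enum_val_inj) eq_sym.
- by rewrite L12 ?enum_valP.
- by rewrite L21 ?enum_valP.
- by rewrite L22 ?enum_valP // (inj_eq enum_val_inj) eq_sym.
Qed.

Definition Rmx (x : TR n -> R) : tensor4 R N1 :=
  fun a b c d => \sum_(s : TR n) x s * Tt s a b c d.

Lemma piRmx u x : piu u (Rmx x) = x u.
Proof.
have -> : piu u (Rmx x) = \sum_(s : TR n) x s * piu u (Tt s) by case: u.
rewrite (bigD1 u) //= piT eqxx mulr1 big1 ?addr0 // => s /negbTE hs.
by rewrite piT hs mulr0.
Qed.

Lemma Tt_alg s : alg_curv (Tt s).
Proof.
case: s => p; apply: KN_alg => a b; rewrite /Emx.
all: rewrite ?(andbC (b == _)) //; by rewrite addrC.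
Qed.

Lemma Rmx_alg x : alg_curv (Rmx x).
Proof.
split => a b c d; rewrite /Rmx.
- rewrite -sumrN; apply: eq_bigr => s _; have [h _ _ _] := Tt_alg s.
  by rewrite (h a b c d) mulrN.
- rewrite -sumrN; apply: eq_bigr => s _; have [_ h _ _] := Tt_alg s.
  by rewrite (h a b c d) mulrN.
- apply: eq_bigr => s _; have [_ _ h _] := Tt_alg s.
  by rewrite (h a b c d).
- rewrite -!big_split /=; apply: big1 => s _; have [_ _ _ h] := Tt_alg s.
  by rewrite -!mulrDr (h a b c d) mulr0.
Qed.
End F.

Theorem mainTheorem2 (R : realType) (n : nat) (g : 'M[R]_n) :
  (4 < n)%N -> inner_product g ->
  exists Rm : tensor4 R n, alg_curv Rm /\
    forall A : tensor3 R n, sym3 A -> rho g A <> Rm.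
Proof.
case: n g => [|n] g hn _; first by [].
apply: NNPP => H.
have surj : forall x : TR n -> R, exists A, sym3 A /\ rho g A = Rmx x.
  move=> x; apply: NNPP => H2; apply: H; exists (Rmx x); split; first exact: Rmx_alg.
  by move=> A hA e; apply: H2; exists A.
have hmN : (#|SA n.+1| < #|{: TR n}|)%N by rewrite card_sum !card_ord; apply: card_cmp.
have [x hx] := quad_not_onto hmN (fun r => Fu_homog g (enum_val r)).
pose x' (u : TR n) := x (enum_rank u).
have [A [hA e]] := surj x'.
have [i] := hx (Aof A).
by rewrite Fu_eval // e piRmx /x' enum_valK eqxx.
Qed.
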